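(* Let $\lambda>0$, $h\in C^2([0,1])$, $\varrho_\lambda(s)=\frac{\lambda}{(1-s)^2}\exp\!\big[-\frac{\lambda s}{1-s}\big]$ for $s\in[0,1)$, and $\tilde h(s)=h(s)-\int_0^1\mathrm dx\,\varrho_\lambda(x)h(x)$. Then the function $G:(0,1)\to\mathbb R$, $$G(s)=\frac1s\exp\Big[\frac{\lambda}{1-s}\Big]\int_0^s\mathrm dx\,\frac{\tilde h(x)}{(1-x)^2}\exp\Big[\frac{-\lambda}{1-x}\Big],$$ has a continuous extension to $[0,1]$ which lies in $C^2([0,1])$.
   Context: $C^2([0,1])$ denotes twice continuously differentiable functions on $[0,1]$, with one-sided derivatives at the endpoints. $h$ is real-valued. *)

(* Defs.v *)
From Stdlib Require Import Reals.
From Coquelicot Require Import Coquelicot.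
Open Scope R_scope.

Definition I01 (x : R) : Prop := 0 <= x <= 1.

Definition cont_within01 (f : R -> R) (x : R) : Prop :=
  filterlim f (within I01 (locally x)) (locally (f x)).

Definition deriv_within01 (f : R -> R) (x l : R) : Prop :=
  filterlim (fun y => (f y - f x) / (y - x))
    (within (fun y => I01 y /\ y <> x) (locally x)) (locally l).

Definition C2_01 (f : R -> R) : Prop :=
  exists f1 f2 : R -> R,
    (forall x, I01 x -> deriv_within01 f x (f1 x)) /\
    (forall x, I01 x -> deriv_within01 f1 x (f2 x)) /\
    (forall x, I01 x -> cont_within01 f2 x).

(* rho_lambda(s) = lambda/(1-s)^2 * exp(-lambda s/(1-s)) for s in [0,1);
   set to 0 at s >= 1 (its continuous extension at s = 1), so that the
   (improper) integral over [0,1] is an ordinary Riemann integral. *)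
Definition rho (lam s : R) : R :=
  if Rlt_dec s 1 then lam / (1 - s) ^ 2 * exp (- (lam * s / (1 - s))) else 0.

Definition htilde (lam : R) (h : R -> R) (s : R) : R :=
  h s - RInt (fun x => rho lam x * h x) 0 1.

Definition Gfun (lam : R) (h : R -> R) (s : R) : R :=
  / s * exp (lam / (1 - s)) *
  RInt (fun x => htilde lam h x / (1 - x) ^ 2 * exp (- lam / (1 - x))) 0 s.

(* Main.v *)
Require Import Defs.
From Stdlib Require Import Reals Lra Lia.
From Coquelicot Require Import Coquelicot.
Open Scope R_scope.


Definition EDW (P : R -> Prop) (f : R -> R) (x l : R) :=
  forall eps, 0 < eps -> exists d, 0 < d /\ forall y, P y -> y <> x -> Rabs (y - x) < d ->
    Rabs ((f y - f x) / (y - x) - l) < eps.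

Definition ECW (P : R -> Prop) (f : R -> R) (x l : R) :=
  forall eps, 0 < eps -> exists d, 0 < d /\ forall y, P y -> Rabs (y - x) < d ->
    Rabs (f y - l) < eps.

Lemma EDW_union P Q f x l : EDW P f x l -> EDW Q f x l -> EDW (fun y => P y \/ Q y) f x l.
Proof.
  intros H1 H2 e He. destruct (H1 e He) as [d1 [Hd1 K1]]. destruct (H2 e He) as [d2 [Hd2 K2]].
  exists (Rmin d1 d2). split. apply Rmin_pos; auto.
  intros y [Py|Qy] Hyx Hy.
  - apply K1; auto. eapply Rlt_le_trans; [exact Hy| apply Rmin_l].
  - apply K2; auto. eapply Rlt_le_trans; [exact Hy| apply Rmin_r].
Qed.

Lemma EDW_mono (P Q : R -> Prop) f x l : (forall y, Q y -> P y) -> EDW P f x l -> EDW Q f x l.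
Proof. intros HQ H e He. destruct (H e He) as [d [Hd K]]. exists d. split; auto. Qed.

Lemma EDW_ext P f g x l : (forall y, P y -> f y = g y) -> f x = g x -> EDW P f x l -> EDW P g x l.
Proof.
  intros He Hx H e Hep. destruct (H e Hep) as [d [Hd K]]. exists d. split; auto.
  intros y Py Hyx Hy. rewrite <- He, <- Hx; auto.
Qed.

Lemma EDW_loc P f x l d0 : 0 < d0 -> (forall y, Rabs (y - x) < d0 -> P y) -> EDW P f x l ->
  derivable_pt_lim f x l.
Proof.
  intros Hd0 HP H e He. destruct (H e He) as [d [Hd K]].
  assert (Hm : 0 < Rmin d d0) by (apply Rmin_pos; auto).
  exists (mkposreal _ Hm). intros h Hh0 Hh. simpl in Hh.
  replace h with ((x + h) - x) at 2 by ring. apply K.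
  - apply HP. replace (x + h - x) with h by ring. eapply Rlt_le_trans; [exact Hh| apply Rmin_r].
  - intro E. apply Hh0. lra.
  - replace (x + h - x) with h by ring. eapply Rlt_le_trans; [exact Hh| apply Rmin_l].
Qed.

Lemma EDW_of_derivable P f x l : derivable_pt_lim f x l -> EDW P f x l.
Proof.
  intros H e He. destruct (H e He) as [d K]. exists d. split. apply cond_pos.
  intros y _ Hyx Hy. specialize (K (y - x)). replace (x + (y - x)) with y in K by ring.
  apply K; auto. intro E; apply Hyx; lra.
Qed.

Definition Ext (phi : R -> R) a1 a2 b1 b2 (x : R) : R :=
  if Rlt_dec x 0 then phi 0 + a1 * x + a2 * x ^ 2 / 2
  else if Rlt_dec 1 x then phi 1 + b1 * (x - 1) + b2 * (x - 1) ^ 2 / 2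
  else phi x.

Lemma Ext_in phi a1 a2 b1 b2 x : I01 x -> Ext phi a1 a2 b1 b2 x = phi x.
Proof.
  unfold Ext, I01; intros Hx. destruct (Rlt_dec x 0); [lra|]. destruct (Rlt_dec 1 x); [lra|]. auto.
Qed.

Lemma Ext_lo phi a1 a2 b1 b2 x : x <= 0 -> Ext phi a1 a2 b1 b2 x = phi 0 + a1 * x + a2 * x ^ 2 / 2.
Proof.
  unfold Ext; intros Hx. destruct (Rlt_dec x 0); auto. destruct (Rlt_dec 1 x); [lra|].
  assert (x = 0) by lra. subst x. field.
Qed.

Lemma Ext_hi phi a1 a2 b1 b2 x : 1 <= x -> Ext phi a1 a2 b1 b2 x = phi 1 + b1 * (x - 1) + b2 * (x - 1) ^ 2 / 2.
Proof.
  unfold Ext; intros Hx. destruct (Rlt_dec x 0); [lra|]. destruct (Rlt_dec 1 x); auto.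
  assert (x = 1) by lra. subst x. field.
Qed.

Lemma poly_der c a1 a2 x0 x : derivable_pt_lim (fun y => c + a1 * (y - x0) + a2 * (y - x0) ^ 2 / 2) x
   (a1 + a2 * (x - x0)).
Proof.
  apply is_derive_Reals. auto_derive; [auto| field].
Qed.

Lemma ext_deriv phi psi a2 b2 :
  (forall x, I01 x -> EDW I01 phi x (psi x)) ->
  forall x, derivable_pt_lim (Ext phi (psi 0) a2 (psi 1) b2) x (Ext psi a2 0 b2 0 x).
Proof.
  intros H x.
  set (F := Ext phi (psi 0) a2 (psi 1) b2).
  assert (Hlo : forall x, x <= 0 -> derivable_pt_lim F x (Ext psi a2 0 b2 0 x) ->
      EDW (fun y => y <= 0) F x (Ext psi a2 0 b2 0 x)) by (intros; apply EDW_of_derivable; auto).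
  assert (Plo : forall x, x <= 0 -> EDW (fun y => y <= 0) F x (Ext psi a2 0 b2 0 x)).
  { intros z Hz. 
    apply (EDW_ext _ (fun y => phi 0 + psi 0 * (y - 0) + a2 * (y - 0) ^ 2 / 2)).
    - intros y Hy. unfold F. rewrite Ext_lo; auto. rewrite Rminus_0_r. reflexivity.
    - unfold F. rewrite Ext_lo; auto. rewrite Rminus_0_r. reflexivity.
    - rewrite Ext_lo; auto. apply EDW_of_derivable.
      replace (psi 0 + a2 * z + 0 * z ^ 2 / 2) with (psi 0 + a2 * (z - 0)) by field.
      apply poly_der. }
  assert (Phi : forall x, 1 <= x -> EDW (fun y => 1 <= y) F x (Ext psi a2 0 b2 0 x)).
  { intros z Hz. 
    apply (EDW_ext _ (fun y => phi 1 + psi 1 * (y - 1) + b2 * (y - 1) ^ 2 / 2)).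
    - intros y Hy. unfold F. rewrite Ext_hi; auto.
    - unfold F. rewrite Ext_hi; auto.
    - rewrite Ext_hi; auto. apply EDW_of_derivable.
      replace (psi 1 + b2 * (z - 1) + 0 * (z - 1) ^ 2 / 2) with (psi 1 + b2 * (z - 1)) by field.
      apply poly_der. }
  assert (Pin : forall x, I01 x -> EDW I01 F x (Ext psi a2 0 b2 0 x)).
  { intros z Hz. rewrite Ext_in; auto. apply (EDW_ext _ phi).
    - intros y Hy; unfold F; rewrite Ext_in; auto.
    - unfold F; rewrite Ext_in; auto.
    - apply H; auto. }
  destruct (Rlt_le_dec x 0) as [Hx0|Hx0].
  - apply (EDW_loc (fun y => y <= 0) _ _ _ (-x)). lra.
    intros y Hy. apply Rabs_def2 in Hy. lra. apply Plo; lra.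
  destruct (Rlt_le_dec 1 x) as [Hx1|Hx1].
  - apply (EDW_loc (fun y => 1 <= y) _ _ _ (x-1)). lra.
    intros y Hy. apply Rabs_def2 in Hy. lra. apply Phi; lra.
  destruct (Req_dec x 0) as [E0|E0].
  - subst x. apply (EDW_loc (fun y => y <= 0 \/ I01 y) _ _ _ 1). lra.
    intros y Hy. apply Rabs_def2 in Hy. unfold I01. lra.
    apply EDW_union. apply Plo; lra. apply Pin. unfold I01; lra.
  destruct (Req_dec x 1) as [E1|E1].
  - subst x. apply (EDW_loc (fun y => 1 <= y \/ I01 y) _ _ _ 1). lra.
    intros y Hy. apply Rabs_def2 in Hy. unfold I01. lra.
    apply EDW_union. apply Phi; lra. apply Pin. unfold I01; lra.
  - apply (EDW_loc I01 _ _ _ (Rmin x (1 - x))). apply Rmin_pos; lra.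
    intros y Hy. apply Rabs_def2 in Hy. unfold I01.
    pose proof (Rmin_l x (1-x)). pose proof (Rmin_r x (1-x)). lra.
    apply Pin. unfold I01; lra.
Qed.

Lemma ext_cont phi :
  (forall x, I01 x -> ECW I01 phi x (phi x)) ->
  forall x, continuity_pt (Ext phi 0 0 0 0) x.
Proof.
  intros H x.
  assert (E : forall y, Ext phi 0 0 0 0 y = phi (Rmax 0 (Rmin 1 y))).
  { intros y. unfold Ext, Rmax, Rmin. 
    destruct (Rlt_dec y 0); destruct (Rlt_dec 1 y); destruct (Rle_dec 1 y); destruct (Rle_dec 0 _);
    try (f_equal; lra); try lra; try ring_simplify; try (f_equal; lra).
    all: destruct (Rle_dec 0 1); try lra; try (f_equal; lra). }
  intros e He. set (z := Rmax 0 (Rmin 1 x)).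
  assert (Iz : I01 z). { unfold z, I01, Rmax, Rmin. repeat (destruct Rle_dec); lra. }
  destruct (H z Iz e He) as [d [Hd K]].
  exists d. split; auto. intros y [_ Hy]. simpl in *. unfold R_dist in *.
  rewrite !E. fold z. apply K.
  { unfold I01, Rmax, Rmin. repeat (destruct Rle_dec); lra. }
  eapply Rle_lt_trans; [|exact Hy]. unfold z, Rmax, Rmin.
  repeat destruct Rle_dec; apply Rabs_def2 in Hy || idtac;
   unfold Rabs; repeat destruct Rcase_abs; lra.
Qed.

Lemma ball_R (x e y : R) : ball x e y <-> Rabs (y - x) < e.
Proof. reflexivity. Qed.

Lemma filterlim_within_eps (P : R -> Prop) (g : R -> R) x l :
  filterlim g (within P (locally x)) (locally l) <->
  ECW P g x l.
Proof.
  rewrite filterlim_locally. split.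
  - intros H eps Heps. destruct (H (mkposreal eps Heps)) as [d Hd].
    exists d. split. apply cond_pos. intros y Py Hy. apply (Hd y). exact Hy. exact Py.
  - intros H eps. destruct (H eps (cond_pos eps)) as [d [Hd0 Hd]].
    exists (mkposreal d Hd0). intros y Hy Py. apply Hd; auto.
Qed.

Lemma DW_iff f x l : deriv_within01 f x l <-> EDW I01 f x l.
Proof.
  unfold deriv_within01. rewrite filterlim_within_eps. unfold ECW, EDW. split.
  - intros H eps Heps. destruct (H eps Heps) as [d [Hd H1]]. exists d; split; auto.
  - intros H eps Heps. destruct (H eps Heps) as [d [Hd H1]]. exists d; split; auto.
    intros y [Py Hy] Hyx. apply H1; auto.
Qed.

Lemma CW_iff f x : cont_within01 f x <-> ECW I01 f x (f x).
Proof. unfold cont_within01. apply filterlim_within_eps. Qed.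


Lemma dR_plus (f g : R -> R) (x df dg : R) : is_derive f x df -> is_derive g x dg ->
  is_derive (fun t => f t + g t) x (df + dg).
Proof. intros. apply (is_derive_plus f g); auto. Qed.
Lemma dR_minus (f g : R -> R) (x df dg : R) : is_derive f x df -> is_derive g x dg ->
  is_derive (fun t => f t - g t) x (df - dg).
Proof. intros. apply (is_derive_minus f g); auto. Qed.
Lemma dR_mult (f g : R -> R) (x df dg : R) : is_derive f x df -> is_derive g x dg ->
  is_derive (fun t => f t * g t) x (df * g x + f x * dg).
Proof. intros. apply (is_derive_mult f g); auto. intros; apply Rmult_comm. Qed.
Lemma dR_eq (f : R -> R) (x l lp : R) : is_derive f x l -> l = lp -> is_derive f x lp.
Proof. intros H ->. auto. Qed.
Lemma dR_const (a x : R) : is_derive (fun _ => a) x 0.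
Proof. apply (is_derive_const a x). Qed.
Lemma dR_id (x : R) : is_derive (fun t => t) x 1.
Proof. apply (is_derive_id x). Qed.
Lemma cR_plus (f g : R -> R) (x : R) : continuous f x -> continuous g x -> continuous (fun t => f t + g t) x.
Proof. intros. apply (continuous_plus f g); auto. Qed.
Lemma cR_minus (f g : R -> R) (x : R) : continuous f x -> continuous g x -> continuous (fun t => f t - g t) x.
Proof. intros. apply (continuous_minus f g); auto. Qed.
Lemma cR_mult (f g : R -> R) (x : R) : continuous f x -> continuous g x -> continuous (fun t => f t * g t) x.
Proof. intros. apply (continuous_mult f g); auto. Qed.
Lemma cR_const (a x : R) : continuous (fun _ => a) x.
Proof. apply continuous_const. Qed.
Lemma cR_id (x : R) : continuous (fun t => t) x.
Proof. apply continuous_id. Qed.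
Lemma cR_der (f : R -> R) (x l : R) : is_derive f x l -> continuous f x.
Proof. intros H. apply (ex_derive_continuous (V := R_NormedModule)). exists l; auto. Qed.

Section K.
Variable lam : R.
Hypothesis Hlam : 0 < lam.

Definition kk (x : R) : R := if Rlt_dec x 1 then / (1 - x) ^ 2 * exp (- lam / (1 - x)) else 0.
Definition EE (x : R) : R := if Rlt_dec x 1 then exp (- lam / (1 - x)) else 0.

Lemma EE_kk x : EE x = (1 - x) ^ 2 * kk x.
Proof.
  unfold EE, kk. destruct (Rlt_dec x 1). field. lra. ring.
Qed.

Lemma kk_nonneg x : 0 <= kk x.
Proof.
  unfold kk. destruct (Rlt_dec x 1); [|lra].
  apply Rmult_le_pos. apply Rlt_le, Rinv_0_lt_compat, pow_lt; lra. apply Rlt_le, exp_pos.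
Qed.

Lemma exp_cube y : 0 <= y -> (y / 3) ^ 3 <= exp y.
Proof.
  intros Hy. replace (exp y) with (exp (y/3) ^ 3).
  apply pow_incr. split. lra. pose proof (exp_ineq1_le (y/3)); lra.
  simpl. rewrite Rmult_1_r, <- !exp_plus. f_equal. field.
Qed.

Lemma kk_bound x : x < 1 -> kk x <= 27 * (1 - x) / lam ^ 3.
Proof.
  intros Hx. unfold kk. destruct (Rlt_dec x 1); [|lra].
  set (t := / (1 - x)).
  assert (Ht : 0 < t) by (apply Rinv_0_lt_compat; lra).
  assert (E1 : - lam / (1 - x) = - (lam * t)) by (unfold t; field; lra).
  rewrite E1, exp_Ropp.
  assert (E2 : / (1 - x) ^ 2 = t ^ 2) by (unfold t; field; lra).
  assert (E3 : 27 * (1 - x) / lam ^ 3 = t ^ 2 / (lam * t / 3) ^ 3) by (unfold t; field; split; lra).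
  rewrite E2, E3. unfold Rdiv. apply Rmult_le_compat_l. apply pow_le; lra.
  apply Rinv_le_contravar. apply pow_lt. apply Rmult_lt_0_compat. apply Rmult_lt_0_compat; lra. lra.
  apply exp_cube. apply Rlt_le, Rmult_lt_0_compat; lra.
Qed.

Lemma kk_cont (x : R) : continuous kk x.
Proof.
  destruct (Rlt_le_dec x 1) as [Hx|Hx].
  - apply (continuous_ext_loc _ (fun y => / (1 - y) ^ 2 * exp (- lam / (1 - y)))).
    + exists (mkposreal (1 - x) ltac:(lra)). intros y Hy. simpl in Hy. 
      change (Rabs (y - x) < 1 - x) in Hy. apply Rabs_def2 in Hy. unfold kk.
      destruct (Rlt_dec y 1); [auto|lra].
    + apply continuity_pt_filterlim. apply derivable_continuous_pt.
      exists (Derive (fun y => / (1 - y) ^ 2 * exp (- lam / (1 - y))) x).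
      apply is_derive_Reals. apply Derive_correct. auto_derive. repeat split; intro; nra.
  - apply continuity_pt_filterlim. intros e He.
    assert (Hd : 0 < e * lam ^ 3 / 28 ) by (apply Rmult_lt_0_compat; [apply Rmult_lt_0_compat; [lra|apply pow_lt; lra]|lra]).
    exists (e * lam ^ 3 / 28). split; [lra|]. intros y [_ Hy]. simpl in Hy. unfold R_dist in *. simpl.
    assert (kx : kk x = 0) by (unfold kk; destruct (Rlt_dec x 1); lra). rewrite kx.
    change (Rabs (kk y - 0) < e). change (Rabs (y - x) < e * lam ^ 3 / 28) in Hy. rewrite Rminus_0_r. rewrite Rabs_pos_eq by apply kk_nonneg.
    destruct (Rlt_le_dec y 1) as [Hy1|Hy1].
    + eapply Rle_lt_trans. apply kk_bound; auto.
      apply Rabs_def2 in Hy. 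
      apply (Rmult_lt_reg_r (lam ^ 3)). apply pow_lt; lra.
      unfold Rdiv. rewrite Rmult_assoc, Rinv_l, Rmult_1_r. 2: apply pow_nonzero; lra.
      assert (0 < lam ^ 3) by (apply pow_lt; lra).
      assert (1 - y < e * lam ^ 3 / 28) by lra. nra.
    + unfold kk. destruct (Rlt_dec y 1); lra.
Qed.

Lemma EE_der (x : R) : is_derive EE x (- lam * kk x).
Proof.
  destruct (Rlt_le_dec x 1) as [Hx|Hx].
  - apply (is_derive_ext_loc (fun y => exp (- lam / (1 - y)))).
    + exists (mkposreal (1 - x) ltac:(lra)). intros y Hy. 
      change (Rabs (y - x) < 1 - x) in Hy. apply Rabs_def2 in Hy. unfold EE.
      destruct (Rlt_dec y 1); [auto|lra].
    + unfold kk. destruct (Rlt_dec x 1); [|lra]. auto_derive. lra. replace (- lam * / (1 + - x)) with (- lam / (1 - x)) by (unfold Rdiv, Rminus; ring). field. lra.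
  - assert (Hx1 : x = 1 \/ 1 < x) by lra. destruct Hx1 as [Hx1|Hx1].
    + subst x. assert (k1 : kk 1 = 0) by (unfold kk; destruct (Rlt_dec 1 1); lra).
      rewrite k1, Rmult_0_r. apply is_derive_Reals. intros e He.
      assert (Hd : 0 < Rmin 1 (e * lam ^ 3 / 28)) by (apply Rmin_pos; [lra|apply Rmult_lt_0_compat; [apply Rmult_lt_0_compat; [lra|apply pow_lt; lra]|lra]]).
      exists (mkposreal _ Hd). intros hh Hh0 Hh. simpl in Hh.
      assert (E1 : EE 1 = 0) by (unfold EE; destruct (Rlt_dec 1 1); lra). rewrite E1.
      rewrite Rminus_0_r, Rminus_0_r.
      destruct (Rlt_le_dec hh 0) as [Hn|Hp].
      * rewrite EE_kk. replace (1 - (1 + hh)) with (- hh) by ring.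
        assert (K := kk_bound (1 + hh) ltac:(lra)). replace (1 - (1 + hh)) with (- hh) in K by ring.
        assert (K0 := kk_nonneg (1 + hh)).
        replace ((- hh) ^ 2 * kk (1 + hh) / hh) with (hh * kk (1 + hh)) by (field; lra).
        rewrite Rabs_mult. rewrite Rabs_pos_eq with (x := kk _) by auto.
        assert (Ha : Rabs hh < 1) by (eapply Rlt_le_trans; [exact Hh|apply Rmin_l]).
        assert (Hb : Rabs hh < e * lam ^ 3 / 28) by (eapply Rlt_le_trans; [exact Hh|apply Rmin_r]).
        rewrite Rabs_left in * by lra.
        assert (0 < lam ^ 3) by (apply pow_lt; lra).
        assert (kk (1 + hh) * lam ^ 3 <= 27 * - hh).
        { apply (Rmult_le_compat_r (lam ^ 3)) in K; [|lra]. unfold Rdiv in K.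
          rewrite Rmult_assoc, Rinv_l, Rmult_1_r in K by lra. lra. }
        assert (kk (1 + hh) * lam ^ 3 < e * lam ^ 3) by lra.
        assert (kk (1 + hh) < e) by nra. nra.
      * unfold EE. destruct (Rlt_dec (1 + hh) 1). lra. unfold Rdiv. rewrite Rmult_0_l, Rabs_R0. lra.
    + assert (k1 : kk x = 0) by (unfold kk; destruct (Rlt_dec x 1); lra). rewrite k1, Rmult_0_r.
      apply (is_derive_ext_loc (fun _ => 0)).
      * exists (mkposreal (x - 1) ltac:(lra)). intros y Hy. 
        change (Rabs (y - x) < x - 1) in Hy. apply Rabs_def2 in Hy. unfold EE.
        destruct (Rlt_dec y 1); [lra|auto].
      * apply dR_const.
Qed.

Lemma EE_cont (x : R) : continuous EE x.
Proof. apply (cR_der _ _ _ (EE_der x)). Qed.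

End K.


Lemma ex_RInt_cont (f : R -> R) a b : (forall x, continuous f x) -> ex_RInt f a b.
Proof. intros H. apply (ex_RInt_continuous (V := R_CompleteNormedModule)). intros; apply H. Qed.

Lemma RInt_plusR (f g : R -> R) a b : ex_RInt f a b -> ex_RInt g a b ->
  RInt (fun x => f x + g x) a b = RInt f a b + RInt g a b.
Proof. intros Hf Hg. exact (RInt_plus f g a b Hf Hg). Qed.

Lemma RInt_scalR (f : R -> R) a b l : ex_RInt f a b ->
  RInt (fun x => l * f x) a b = l * RInt f a b.
Proof. intros Hf. exact (RInt_scal f a b l Hf). Qed.

Lemma RInt_constR (a b c : R) : RInt (fun _ => c) a b = (b - a) * c.
Proof. exact (RInt_const a b c). Qed.

Lemma RInt_extR (f g : R -> R) a b : (forall x, Rmin a b < x < Rmax a b -> f x = g x) ->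
  RInt f a b = RInt g a b.
Proof. intros H. exact (RInt_ext f g a b H). Qed.

Lemma ex_RInt_extR (f g : R -> R) a b : (forall x, Rmin a b < x < Rmax a b -> f x = g x) ->
  ex_RInt f a b -> ex_RInt g a b.
Proof. intros H. exact (ex_RInt_ext f g a b H). Qed.

Lemma RInt_uniqueR (f : R -> R) a b l : is_RInt f a b l -> RInt f a b = l.
Proof. intros H. exact (is_RInt_unique f a b l H). Qed.

Lemma d_pow1 n (x : R) : is_derive (fun x => (1 - x) ^ n) x (- INR n * (1 - x) ^ (pred n)).
Proof.
  apply (dR_eq _ _ (INR n * (-1) * (1 - x) ^ pred n)).
  apply (is_derive_pow (fun x => 1 - x)). apply (dR_eq _ _ (0 - 1)). apply dR_minus. apply dR_const. apply dR_id.
  ring. ring.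
Qed.

Lemma c_pow1 n (x : R) : continuous (fun x => (1 - x) ^ n) x.
Proof. eapply cR_der. apply d_pow1. Qed.

Section L.
Variable lam : R.
Hypothesis Hlam : 0 < lam.

Definition Lop (g : R -> R) (s : R) : R :=
  exp (lam / (1 - s)) * RInt (fun x => g x * kk lam x) s 1.

Lemma cont_gk (g : R -> R) x : (forall x, continuous g x) -> continuous (fun x => g x * kk lam x) x.
Proof. intros H. apply cR_mult; auto. apply kk_cont; auto. Qed.

Lemma Lop_ext (f g : R -> R) s : s < 1 -> (forall x, s < x < 1 -> f x = g x) -> Lop f s = Lop g s.
Proof.
  intros Hs H. unfold Lop. apply (f_equal (fun t => _ * t)). apply RInt_extR. intros x.
  rewrite Rmin_left, Rmax_right by lra. intros Hx. rewrite H; auto.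
Qed.

Lemma Lop_plus (f g : R -> R) s : (forall x, continuous f x) -> (forall x, continuous g x) ->
  Lop (fun x => f x + g x) s = Lop f s + Lop g s.
Proof.
  intros Hf Hg. unfold Lop. rewrite <- Rmult_plus_distr_l. apply (f_equal (fun t => _ * t)).
  rewrite (RInt_extR _ (fun x => f x * kk lam x + g x * kk lam x)).
  apply RInt_plusR; apply ex_RInt_cont; intros; apply cont_gk; auto.
  intros. ring.
Qed.

Lemma Lop_scal a (f : R -> R) s : (forall x, continuous f x) ->
  Lop (fun x => a * f x) s = a * Lop f s.
Proof.
  intros Hf. unfold Lop.
  rewrite (RInt_extR _ (fun x => a * (f x * kk lam x))).
  rewrite RInt_scalR. ring.
  apply ex_RInt_cont; intros; apply cont_gk; auto.
  intros. ring.
Qed.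

Lemma Lop_zero s : Lop (fun _ => 0) s = 0.
Proof.
  unfold Lop. rewrite (RInt_extR _ (fun _ => 0)). rewrite RInt_constR. ring. intros; ring.
Qed.

Lemma exp_inv_mul s : exp (lam / (1 - s)) * exp (- lam / (1 - s)) = 1.
Proof.
  rewrite <- exp_plus. replace (lam / (1 - s) + - lam / (1 - s)) with 0.
  apply exp_0. unfold Rdiv. ring.
Qed.

Lemma alg_ibp (I1 I2 e1 e2 g1 gs : R) : I1 + - lam * I2 = g1 * 0 - gs * e2 -> e1 * e2 = 1 ->
  lam * (e1 * I2) = gs + e1 * I1.
Proof.
  intros H1 H2. assert (I1 = - gs * e2 + lam * I2) by (rewrite <- (Rplus_0_r I1); rewrite <- (Rplus_opp_r (lam * I2)); 
   transitivity (I1 + - lam * I2 + lam * I2); [ring|]; rewrite H1; ring).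
  rewrite H. replace (e1 * (- gs * e2 + lam * I2)) with (- gs * (e1 * e2) + lam * (e1 * I2)) by ring.
  rewrite H2. ring.
Qed.

Lemma IBP (g g' : R -> R) s : s < 1 -> (forall x, is_derive g x (g' x)) -> (forall x, continuous g' x) ->
  lam * Lop g s = g s + Lop (fun x => (1 - x) ^ 2 * g' x) s.
Proof.
  intros Hs Hd Hc.
  assert (Hgc : forall x, continuous g x) by (intros; eapply cR_der; eauto).
  assert (Hi : is_RInt (fun x => g' x * EE lam x + g x * (- lam * kk lam x)) s 1
                (minus (g 1 * EE lam 1) (g s * EE lam s))).
  { apply (is_RInt_derive (fun x => g x * EE lam x)).
    - intros x _. apply dR_mult; auto. apply EE_der; auto.
    - intros x _. apply cR_plus; apply cR_mult; auto. apply EE_cont; auto.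
      apply cR_mult. apply cR_const. apply kk_cont; auto. }
  apply RInt_uniqueR in Hi.
  rewrite (RInt_extR _ (fun x => ((1 - x) ^ 2 * g' x) * kk lam x + (- lam) * (g x * kk lam x))) in Hi.
  2:{ intros x _. rewrite EE_kk. ring. }
  rewrite RInt_plusR in Hi.
  2:{ apply ex_RInt_cont. intros; apply cont_gk. intros; apply cR_mult; auto.
      apply c_pow1. }
  2:{ apply ex_RInt_cont. intros; apply cR_mult. apply cR_const. apply cont_gk; auto. }
  rewrite RInt_scalR in Hi by (apply ex_RInt_cont; intros; apply cont_gk; auto).
  assert (E1 : EE lam 1 = 0) by (unfold EE; destruct (Rlt_dec 1 1); lra).
  assert (Es : EE lam s = exp (- lam / (1 - s))) by (unfold EE; destruct (Rlt_dec s 1); lra).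
  rewrite E1, Es in Hi. unfold Lop.
  exact (alg_ibp _ _ _ _ _ _ Hi (exp_inv_mul s)).
Qed.

Lemma Lop_one s : s < 1 -> lam * Lop (fun _ => 1) s = 1.
Proof.
  intros Hs. rewrite (IBP (fun _ => 1) (fun _ => 0)); auto.
  rewrite (Lop_ext _ (fun _ => 0)) by (auto; intros; ring). rewrite Lop_zero. ring.
  intros; apply dR_const. intros; apply cR_const.
Qed.

Lemma Lop_bound (g : R -> R) s M : s < 1 -> (forall x, continuous g x) -> (forall x, s <= x <= 1 -> Rabs (g x) <= M) ->
  Rabs (Lop g s) <= M / lam.
Proof.
  intros Hs Hc HM.
  pose proof (Lop_one s Hs) as H1. unfold Lop in *.
  assert (He : 0 < exp (lam / (1 - s))) by apply exp_pos.
  rewrite Rabs_mult, Rabs_pos_eq by lra.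
  assert (Hle : Rabs (RInt (fun x => g x * kk lam x) s 1) <= M * RInt (fun x => 1 * kk lam x) s 1).
  { eapply Rle_trans. apply abs_RInt_le. lra. apply ex_RInt_cont; intros; apply cont_gk; auto.
    rewrite <- (Rmult_1_r M) at 1.
    replace (M * 1 * RInt (fun x : R => 1 * kk lam x) s 1) with (scal M (RInt (fun x : R => 1 * kk lam x) s 1)).
    2:{ unfold scal; simpl; unfold mult; simpl. ring. }
    rewrite <- RInt_scal. 2:{ apply ex_RInt_cont; intros; apply cont_gk; intros; apply cR_const. }
    apply RInt_le. lra.
    apply (ex_RInt_ext (fun x => Rabs (g x * kk lam x))). intros; reflexivity.
    apply ex_RInt_cont. intros x. apply (continuous_comp (fun x => g x * kk lam x) Rabs).
    apply cont_gk; auto. apply continuous_Rabs.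
    apply (ex_RInt_ext (fun x => M * (1 * kk lam x))). intros; reflexivity.
    apply ex_RInt_cont. intros; apply cR_mult. apply cR_const. apply cont_gk; intros; apply cR_const.
    intros x Hx. unfold scal; simpl; unfold mult; simpl.
    rewrite Rabs_mult, (Rabs_pos_eq (kk lam x)) by (apply kk_nonneg; auto).
    rewrite Rmult_1_l. apply Rmult_le_compat_r. apply kk_nonneg; auto. apply HM; lra. }
  apply (Rmult_le_compat_l (exp (lam / (1 - s)))) in Hle; [|lra].
  eapply Rle_trans. exact Hle.
  apply (Rmult_le_reg_l lam); auto.
  replace (lam * (exp (lam / (1 - s)) * (M * RInt (fun x : R => 1 * kk lam x) s 1)))
    with (M * (lam * (exp (lam / (1 - s)) * RInt (fun x : R => 1 * kk lam x) s 1))) by ring.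
  rewrite H1. right. field. lra.
Qed.

End L.


Definition LimL (f : R -> R) (l : R) :=
  forall eps, 0 < eps -> exists d, 0 < d /\ forall s, 1 - d < s < 1 -> Rabs (f s - l) < eps.
Definition LimR0 (f : R -> R) (l : R) :=
  forall eps, 0 < eps -> exists d, 0 < d /\ forall s, 0 < s < d -> Rabs (f s - l) < eps.

Lemma LimL_iff f l : LimL f l <-> filterlim f (at_left 1) (locally l).
Proof.
  rewrite filterlim_locally. split.
  - intros H eps. destruct (H eps (cond_pos eps)) as [d [Hd K]].
    exists (mkposreal d Hd). intros y Hy Hy1. change (Rabs (f y - l) < eps). apply K.
    change (Rabs (y - 1) < d) in Hy. apply Rabs_def2 in Hy. lra.
  - intros H eps Heps. destruct (H (mkposreal eps Heps)) as [d Hd].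
    exists d. split. apply cond_pos. intros s Hs. apply (Hd s).
    change (Rabs (s - 1) < d). rewrite Rabs_left by lra. lra. lra.
Qed.

Lemma LimR0_iff f l : LimR0 f l <-> filterlim f (at_right 0) (locally l).
Proof.
  rewrite filterlim_locally. split.
  - intros H eps. destruct (H eps (cond_pos eps)) as [d [Hd K]].
    exists (mkposreal d Hd). intros y Hy Hy1. change (Rabs (f y - l) < eps). apply K.
    change (Rabs (y - 0) < d) in Hy. apply Rabs_def2 in Hy. lra.
  - intros H eps Heps. destruct (H (mkposreal eps Heps)) as [d Hd].
    exists d. split. apply cond_pos. intros s Hs. apply (Hd s).
    change (Rabs (s - 0) < d). rewrite Rabs_right by lra. lra. lra.
Qed.

Section LimAlg.
Context {T : Type} {F : (T -> Prop) -> Prop} {FF : Filter F}.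
Lemma lim_plus (f g : T -> R) (a b : R) : filterlim f F (locally a) -> filterlim g F (locally b) ->
  filterlim (fun x => f x + g x) F (locally (a + b)).
Proof. intros Hf Hg. exact (filterlim_comp_2 f g plus Hf Hg (filterlim_plus a b)). Qed.
Lemma lim_mult (f g : T -> R) (a b : R) : filterlim f F (locally a) -> filterlim g F (locally b) ->
  filterlim (fun x => f x * g x) F (locally (a * b)).
Proof. intros Hf Hg. exact (filterlim_comp_2 f g mult Hf Hg (filterlim_mult a b)). Qed.
Lemma lim_const (a : R) : filterlim (fun _ : T => a) F (locally a).
Proof. apply filterlim_const. Qed.
Lemma lim_scal (f : T -> R) (c a : R) : filterlim f F (locally a) -> filterlim (fun x => c * f x) F (locally (c * a)).
Proof. intros; apply lim_mult; auto. apply lim_const. Qed.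
Lemma lim_minus (f g : T -> R) (a b : R) : filterlim f F (locally a) -> filterlim g F (locally b) ->
  filterlim (fun x => f x - g x) F (locally (a - b)).
Proof.
  intros Hf Hg. apply (lim_plus f (fun x => - g x)); auto.
  replace (- b) with (-1 * b) by ring.
  apply (filterlim_ext (fun x => -1 * g x)). intros; ring. apply lim_scal; auto.
Qed.
Lemma lim_eq (f : T -> R) (a b : R) : filterlim f F (locally a) -> a = b -> filterlim f F (locally b).
Proof. intros H ->; auto. Qed.
End LimAlg.

Section LA.
Variable lam : R.
Hypothesis Hlam : 0 < lam.

Lemma alg_A (A Lp Rr T c1 eta K eps : R) : 0 < T -> lam * Lp = T + Rr ->
  Rabs A <= T * eta / lam -> Rabs Rr <= K * T / lam -> eta / lam <= eps / 2 ->
  Rabs c1 * K / lam ^ 2 < eps / 2 -> Rabs ((A + c1 * Lp) / T - c1 / lam) < eps.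
Proof.
  intros HT HL HA HR He Hk.
  assert (E : (A + c1 * Lp) / T - c1 / lam = A / T + c1 * Rr / (lam * T)).
  { assert (Lp = (T + Rr) / lam) by (rewrite <- HL; field; lra). subst Lp. field. split; lra. }
  rewrite E. eapply Rle_lt_trans. apply Rabs_triang.
  assert (H1 : Rabs (A / T) <= eta / lam).
  { unfold Rdiv. rewrite Rabs_mult, Rabs_inv, (Rabs_pos_eq T) by lra.
    apply (Rmult_le_reg_r T); auto. rewrite Rmult_assoc, Rinv_l, Rmult_1_r by lra.
    eapply Rle_trans. exact HA. right. field. lra. }
  assert (H2' : Rabs (Rr / (lam * T)) <= K / lam ^ 2).
  { unfold Rdiv. rewrite Rabs_mult, Rabs_inv, (Rabs_pos_eq (lam * T)) by nra.
    apply (Rmult_le_reg_r (lam * T)). nra. rewrite Rmult_assoc, Rinv_l, Rmult_1_r by nra.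
    eapply Rle_trans. exact HR. right. field. lra. }
  assert (H2 : Rabs (c1 * Rr / (lam * T)) <= Rabs c1 * K / lam ^ 2).
  { replace (c1 * Rr / (lam * T)) with (c1 * (Rr / (lam * T))) by (field; lra).
    rewrite Rabs_mult. unfold Rdiv at 2. rewrite Rmult_assoc. apply Rmult_le_compat_l. apply Rabs_pos. exact H2'. }
  lra.
Qed.

Lemma pow_bound_1x (x s : R) n : s <= x <= 1 -> Rabs ((1 - x) ^ n) <= (1 - s) ^ n.
Proof.
  intros Hx. rewrite Rabs_pos_eq by (apply pow_le; lra). apply pow_incr. lra.
Qed.

Lemma LopA (c : R -> R) n : (forall x, continuous c x) ->
  LimL (fun s => Lop lam (fun x => (1 - x) ^ n * c x) s / (1 - s) ^ n) (c 1 / lam).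
Proof.
  intros Hc eps Heps.
  set (eta := eps * lam / 2).
  assert (Heta : 0 < eta) by (unfold eta; nra).
  pose proof (Hc 1) as Hc1. unfold continuous in Hc1. rewrite filterlim_locally in Hc1. destruct (Hc1 (mkposreal eta Heta)) as [d1 Hd1].
  set (d2 := eps * lam ^ 2 / (2 * (Rabs (c 1) * INR n + 1))).
  assert (Hpos : 0 < Rabs (c 1) * INR n + 1) by (pose proof (Rabs_pos (c 1)); pose proof (pos_INR n); nra).
  assert (Hd2 : 0 < d2) by (unfold d2; apply Rmult_lt_0_compat; [apply Rmult_lt_0_compat; [lra|apply pow_lt; lra]|apply Rinv_0_lt_compat; lra]).
  exists (Rmin d1 d2). split. apply Rmin_pos; [apply cond_pos|auto].
  intros s Hs.
  assert (Hs1 : 1 - s < d1) by (pose proof (Rmin_l d1 d2); lra).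
  assert (Hs2 : 1 - s < d2) by (pose proof (Rmin_r d1 d2); lra).
  assert (Hcont : forall (f : R -> R), (forall x, continuous f x) -> forall x, continuous (fun x => (1 - x) ^ n * f x) x).
  { intros f Hf x. apply cR_mult. apply c_pow1. auto. }
  rewrite (Lop_ext lam _ (fun x => (1 - x) ^ n * (c x - c 1) + c 1 * ((1 - x) ^ n * 1))) by (try lra; intros; ring).
  rewrite Lop_plus, Lop_scal; auto.
  2:{ apply Hcont. intros; apply cR_const. }
  2:{ apply Hcont. intros; apply cR_minus; auto. apply cR_const. }
  2:{ intros; apply cR_mult. apply cR_const. apply Hcont. intros; apply cR_const. }
  pose proof (IBP lam Hlam (fun x => (1 - x) ^ n) (fun x => - INR n * (1 - x) ^ (pred n)) s ltac:(lra)
     (d_pow1 n) ltac:(intros; apply cR_mult; [apply cR_const|apply c_pow1])) as HI.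
  rewrite (Lop_ext lam (fun x => (1 - x) ^ n * 1) (fun x => (1 - x) ^ n)) by (try lra; intros; ring).
  eapply (alg_A _ _ _ _ _ eta (INR n * (1 - s))).
  - apply pow_lt; lra.
  - exact HI.
  - apply (Lop_bound lam Hlam); [lra| |]. apply Hcont. intros; apply cR_minus; auto; apply cR_const.
    intros x Hx. rewrite Rabs_mult. apply Rmult_le_compat. apply Rabs_pos. apply Rabs_pos.
    apply pow_bound_1x; auto. left. apply (Hd1 x). change (Rabs (x - 1) < d1).
    rewrite Rabs_left1 by lra. lra.
  - replace (INR n * (1 - s) * (1 - s) ^ n) with (INR n * (1 - s) ^ (S n)) by (simpl; ring).
    apply (Lop_bound lam Hlam); [lra| |].
    + intros; apply cR_mult. apply c_pow1. apply cR_mult. apply cR_const. apply c_pow1.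
    + intros x Hx. destruct n as [|m].
      * simpl. rewrite Rmult_0_l, Ropp_0, !Rmult_0_l, Rmult_0_r, Rabs_R0. lra.
      * replace ((1 - x) ^ 2 * (- INR (S m) * (1 - x) ^ pred (S m))) with (- (INR (S m) * (1 - x) ^ (S (S m)))).
        2:{ simpl. ring. }
        rewrite Rabs_Ropp, Rabs_mult, (Rabs_pos_eq (INR _)) by apply pos_INR.
        apply Rmult_le_compat_l. apply pos_INR. apply pow_bound_1x; auto.
  - unfold eta. right. field. lra.
  - apply (Rmult_lt_reg_r (lam ^ 2)). apply pow_lt; lra.
    unfold Rdiv. rewrite Rmult_assoc, Rinv_l, Rmult_1_r by (apply pow_nonzero; lra).
    unfold d2 in Hs2.
    assert (0 < lam ^ 2) by (apply pow_lt; lra).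
    assert (Hx : (1 - s) * (2 * (Rabs (c 1) * INR n + 1)) < eps * lam ^ 2).
    { apply (Rmult_lt_compat_r (2 * (Rabs (c 1) * INR n + 1))) in Hs2; [|lra].
      unfold Rdiv in Hs2. rewrite Rmult_assoc, Rinv_l, Rmult_1_r in Hs2 by lra. exact Hs2. }
    assert (0 <= Rabs (c 1) * INR n) by (apply Rmult_le_pos; [apply Rabs_pos|apply pos_INR]).
    nra.
Qed.

End LA.


Lemma cpt_of_der (f : R -> R) (x l : R) : is_derive f x l -> continuity_pt f x.
Proof. intros H. apply derivable_continuous_pt. exists l. apply is_derive_Reals. auto. Qed.

Lemma cpt_loc (f g : R -> R) x d : 0 < d -> (forall y, Rabs (y - x) < d -> f y = g y) ->
  continuity_pt g x -> continuity_pt f x.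
Proof.
  intros Hd He Hc e He0. destruct (Hc e He0) as [a [Ha K]].
  exists (Rmin a d). split. apply Rlt_gt, Rmin_pos; lra.
  intros y [Hxy Hy]. simpl in *. unfold R_dist in *.
  rewrite (He y), (He x). apply K. split. exact Hxy. eapply Rlt_le_trans; [exact Hy| apply Rmin_l].
  rewrite Rminus_eq_0, Rabs_R0; auto. eapply Rlt_le_trans; [exact Hy| apply Rmin_r].
Qed.

Lemma der_loc (f g : R -> R) x d l : 0 < d -> (forall y, Rabs (y - x) < d -> f y = g y) ->
  is_derive g x l -> is_derive f x l.
Proof.
  intros Hd He H. apply (is_derive_ext_loc g). exists (mkposreal d Hd). intros y Hy.
  symmetry. apply He. exact Hy. exact H.
Qed.

Lemma end_right (g g' : R -> R) l0 l1 :
  (forall t, 0 < t < 1 -> is_derive g t (g' t)) -> LimR0 g l0 -> LimR0 g' l1 ->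
  forall eps, 0 < eps -> exists d, 0 < d /\ d <= 1 /\
    forall y, 0 < y < d -> Rabs ((g y - l0) / (y - 0) - l1) < eps.
Proof.
  intros Hd H0 H1 eps Heps. destruct (H1 eps Heps) as [d [Hd0 K]].
  exists (Rmin d 1). split. apply Rmin_pos; lra. split. apply Rmin_r.
  intros y Hy. assert (Hyd : y < d) by (pose proof (Rmin_l d 1); lra).
  assert (Hy1 : y < 1) by (pose proof (Rmin_r d 1); lra).
  set (gh := fun t => if Rle_dec t 0 then l0 else g t).
  set (dh := fun t => if Rle_dec t 0 then l1 else g' t).
  destruct (MVT_gen gh 0 y dh) as [c [Hc Hm]].
  - rewrite Rmin_left, Rmax_right by lra. intros x Hx.
    apply (der_loc _ g x x). lra. intros z Hz. apply Rabs_def2 in Hz. unfold gh. destruct (Rle_dec z 0); [lra|auto].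
    unfold dh. destruct (Rle_dec x 0); [lra|]. apply Hd. lra.
  - rewrite Rmin_left, Rmax_right by lra. intros x Hx.
    destruct (Req_dec x 0) as [E|E].
    + subst x. intros e He. destruct (H0 e He) as [a [Ha Ka]]. exists a. split; [lra|].
      intros z [_ Hz]. simpl in *. unfold R_dist in *. unfold gh. destruct (Rle_dec 0 0); [|lra].
      destruct (Rle_dec z 0). rewrite Rminus_eq_0, Rabs_R0; lra.
      apply Ka. rewrite Rminus_0_r in Hz. apply Rabs_def2 in Hz. lra.
    + apply (cpt_loc _ g x x). lra. intros z Hz. apply Rabs_def2 in Hz. unfold gh. destruct (Rle_dec z 0); [lra|auto].
      apply (cpt_of_der _ _ (g' x)). apply Hd. lra.
  - rewrite Rmin_left, Rmax_right in Hc by lra.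
    unfold gh in Hm. destruct (Rle_dec y 0); [lra|]. destruct (Rle_dec 0 0); [|lra].
    rewrite Hm. replace (dh c * (y - 0) / (y - 0)) with (dh c) by (field; lra).
    unfold dh. destruct (Rle_dec c 0). rewrite Rminus_eq_0, Rabs_R0; lra.
    apply K. lra.
Qed.

Lemma end_left (g g' : R -> R) l0 l1 :
  (forall t, 0 < t < 1 -> is_derive g t (g' t)) -> LimL g l0 -> LimL g' l1 ->
  forall eps, 0 < eps -> exists d, 0 < d /\ d <= 1 /\
    forall y, 1 - d < y < 1 -> Rabs ((g y - l0) / (y - 1) - l1) < eps.
Proof.
  intros Hd H0 H1 eps Heps. destruct (H1 eps Heps) as [d [Hd0 K]].
  exists (Rmin d 1). split. apply Rmin_pos; lra. split. apply Rmin_r.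
  intros y Hy. assert (Hyd : 1 - d < y) by (pose proof (Rmin_l d 1); lra).
  assert (Hy1 : 0 < y) by (pose proof (Rmin_r d 1); lra).
  set (gh := fun t => if Rle_dec 1 t then l0 else g t).
  set (dh := fun t => if Rle_dec 1 t then l1 else g' t).
  destruct (MVT_gen gh y 1 dh) as [c [Hc Hm]].
  - rewrite Rmin_left, Rmax_right by lra. intros x Hx.
    apply (der_loc _ g x (1 - x)). lra. intros z Hz. apply Rabs_def2 in Hz. unfold gh. destruct (Rle_dec 1 z); [lra|auto].
    unfold dh. destruct (Rle_dec 1 x); [lra|]. apply Hd. lra.
  - rewrite Rmin_left, Rmax_right by lra. intros x Hx.
    destruct (Req_dec x 1) as [E|E].
    + subst x. intros e He. destruct (H0 e He) as [a [Ha Ka]]. exists a. split; [lra|].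
      intros z [_ Hz]. simpl in *. unfold R_dist in *. unfold gh. destruct (Rle_dec 1 1); [|lra].
      destruct (Rle_dec 1 z). rewrite Rminus_eq_0, Rabs_R0; lra.
      apply Ka. apply Rabs_def2 in Hz. lra.
    + apply (cpt_loc _ g x (1 - x)). lra. intros z Hz. apply Rabs_def2 in Hz. unfold gh. destruct (Rle_dec 1 z); [lra|auto].
      apply (cpt_of_der _ _ (g' x)). apply Hd. lra.
  - rewrite Rmin_left, Rmax_right in Hc by lra.
    unfold gh in Hm. destruct (Rle_dec 1 y); [lra|]. destruct (Rle_dec 1 1); [|lra].
    replace ((g y - l0) / (y - 1)) with ((l0 - g y) / (1 - y)) by (field; lra).
    rewrite Hm. replace (dh c * (1 - y) / (1 - y)) with (dh c) by (field; lra).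
    unfold dh. destruct (Rle_dec 1 c). rewrite Rminus_eq_0, Rabs_R0; lra.
    apply K. lra.
Qed.

Lemma lim0_pow (phi psi : R -> R) m :
  phi 0 = 0 -> (forall t, 0 <= t < 1 -> is_derive phi t (t ^ m * psi t)) -> continuous psi 0 ->
  LimR0 (fun s => phi s / s ^ (S m)) (psi 0 / INR (S m)).
Proof.
  intros H0 Hd Hc eps Heps.
  unfold continuous in Hc. rewrite filterlim_locally in Hc. destruct (Hc (mkposreal eps Heps)) as [d Hdd].
  exists (Rmin d 1). split. apply Rmin_pos. apply cond_pos. lra.
  intros s Hs. assert (Hsd : s < d) by (pose proof (Rmin_l d 1); lra).
  assert (Hs1 : s < 1) by (pose proof (Rmin_r d 1); lra).
  set (D := fun t => phi t - psi 0 / INR (S m) * t ^ (S m)).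
  assert (HD : forall t, 0 <= t < 1 -> is_derive D t (t ^ m * (psi t - psi 0))).
  { intros t Ht. unfold D. apply (dR_eq _ _ (t ^ m * psi t - psi 0 / INR (S m) * (INR (S m) * 1 * t ^ pred (S m)))).
    apply dR_minus. apply Hd; auto. apply is_derive_scal. apply (is_derive_pow (fun t => t)). apply dR_id.
    simpl pred. field. apply not_0_INR. lia. }
  destruct (MVT_gen D 0 s (fun t => t ^ m * (psi t - psi 0))) as [c [Hc0 Hm]].
  - rewrite Rmin_left, Rmax_right by lra. intros x Hx. apply HD. lra.
  - rewrite Rmin_left, Rmax_right by lra. intros x Hx. apply (cpt_of_der _ _ _ (HD x ltac:(lra))).
  - rewrite Rmin_left, Rmax_right in Hc0 by lra.
    assert (HD0 : D 0 = 0) by (unfold D; rewrite H0; simpl; ring).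
    rewrite HD0, !Rminus_0_r in Hm.
    assert (Hsp : 0 < s ^ S m) by (apply pow_lt; lra).
    replace (phi s / s ^ S m - psi 0 / INR (S m)) with (D s / s ^ S m) by (unfold D; field; split; [apply not_0_INR; lia| lra]).
    rewrite Hm. unfold Rdiv. rewrite Rabs_mult, Rabs_mult, Rabs_inv, (Rabs_pos_eq (s ^ S m)) by lra.
    assert (Hcm : Rabs (c ^ m) <= s ^ m) by (rewrite Rabs_pos_eq by (apply pow_le; lra); apply pow_incr; lra).
    assert (Hpc : Rabs (psi c - psi 0) < eps).
    { apply (Hdd c). change (Rabs (c - 0) < d). rewrite Rminus_0_r, Rabs_pos_eq by lra. lra. }
    rewrite (Rabs_pos_eq s) by lra.
    replace (s ^ S m) with (s * s ^ m) by (simpl; ring).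
    assert (0 < s ^ m) by (apply pow_lt; lra).
    rewrite Rinv_mult.
    rewrite Rabs_mult. replace (Rabs (c ^ m) * Rabs (psi c - psi 0) * s * (/ s * / s ^ m)) with
        ((Rabs (c ^ m) / s ^ m) * Rabs (psi c - psi 0)) by (field; lra).
    assert (Rabs (c ^ m) / s ^ m <= 1).
    { apply (Rmult_le_reg_r (s ^ m)); auto. unfold Rdiv. rewrite Rmult_assoc, Rinv_l, Rmult_1_r, Rmult_1_l by lra. auto. }
    assert (0 <= Rabs (c ^ m) / s ^ m) by (apply Rmult_le_pos; [apply Rabs_pos| apply Rlt_le, Rinv_0_lt_compat; lra]).
    pose proof (Rabs_pos (psi c - psi 0)). nra.
Qed.


Lemma RInt_correctR (f : R -> R) a b : ex_RInt f a b -> is_RInt f a b (RInt f a b).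
Proof. intros H. exact (RInt_correct f a b H). Qed.

Lemma dR_inv (f : R -> R) (x l : R) : is_derive f x l -> f x <> 0 -> is_derive (fun y => / f y) x (- l / f x ^ 2).
Proof. apply is_derive_inv. Qed.

Section M.
Variable lam : R.
Hypothesis Hlam : 0 < lam.
Variables u u1 u2 : R -> R.
Hypothesis Hu : forall x, is_derive u x (u1 x).
Hypothesis Hu1 : forall x, is_derive u1 x (u2 x).
Hypothesis Hu2 : forall x, continuous u2 x.

Lemma cu x : continuous u x. Proof. eapply cR_der; apply Hu. Qed.
Lemma cu1 x : continuous u1 x. Proof. eapply cR_der; apply Hu1. Qed.

Definition Fi s := RInt (fun x => u x * kk lam x) 0 s.
Definition ee s := exp (lam / (1 - s)).
Definition aa s := / (1 - s).
Definition vv s := ee s * Fi s.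
Definition W0 s := lam * vv s + u s.
Definition V1 s := aa s ^ 2 * W0 s.
Definition W1 s := lam * V1 s + u1 s.
Definition V2 s := 2 * aa s ^ 3 * W0 s + aa s ^ 2 * W1 s.
Definition W2 s := lam * V2 s + u2 s.
Definition V3 s := 6 * aa s ^ 4 * W0 s + 4 * aa s ^ 3 * W1 s + aa s ^ 2 * W2 s.

Lemma d_Fi (s : R) : is_derive Fi s (u s * kk lam s).
Proof.
  apply (is_derive_RInt (fun x => u x * kk lam x) Fi 0 s).
  - exists (mkposreal 1 Rlt_0_1). intros b _. apply RInt_correctR. apply ex_RInt_cont.
    intros; apply cont_gk; auto. apply cu.
  - apply cont_gk; auto. apply cu.
Qed.

Lemma d_ee (s : R) : s < 1 -> is_derive ee s (lam * aa s ^ 2 * ee s).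
Proof.
  intros Hs. unfold ee, aa. auto_derive. lra. unfold Rminus, Rdiv. field. lra.
Qed.

Lemma d_aapow n (s : R) : s < 1 -> is_derive (fun s => aa s ^ n) s (INR n * aa s ^ (S n)).
Proof.
  intros Hs. apply (dR_eq _ _ (INR n * aa s ^ 2 * aa s ^ pred n)).
  apply (is_derive_pow aa). unfold aa. auto_derive. lra. field. lra.
  destruct n. simpl. ring. simpl pred. replace (S (S n)) with (2 + n)%nat by lia. rewrite pow_add. ring.
Qed.

Lemma ee_kk (s : R) : s < 1 -> ee s * kk lam s = aa s ^ 2.
Proof.
  intros Hs. unfold ee, kk, aa. destruct (Rlt_dec s 1); [|lra].
  rewrite Rmult_comm, Rmult_assoc, (Rmult_comm (exp _)), exp_inv_mul. field. lra.
Qed.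

Lemma d_vv (s : R) : s < 1 -> is_derive vv s (V1 s).
Proof.
  intros Hs. unfold vv. eapply dR_eq. apply dR_mult. apply d_ee; auto. apply d_Fi.
  unfold V1, W0, vv. replace (ee s * (u s * kk lam s)) with (u s * (ee s * kk lam s)) by ring. rewrite ee_kk; auto. ring.
Qed.

Lemma d_W0 (s : R) : s < 1 -> is_derive W0 s (W1 s).
Proof.
  intros Hs. unfold W0. eapply dR_eq. apply dR_plus. apply is_derive_scal. apply d_vv; auto. apply Hu.
  unfold W1. ring.
Qed.

Lemma d_V1 (s : R) : s < 1 -> is_derive V1 s (V2 s).
Proof.
  intros Hs. unfold V1. eapply dR_eq. apply dR_mult. apply d_aapow; auto. apply d_W0; auto.
  unfold V2. simpl INR. ring.
Qed.

Lemma d_W1 (s : R) : s < 1 -> is_derive W1 s (W2 s).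
Proof.
  intros Hs. unfold W1. eapply dR_eq. apply dR_plus. apply is_derive_scal. apply d_V1; auto. apply Hu1.
  unfold W2. ring.
Qed.

Lemma d_V2 (s : R) : s < 1 -> is_derive V2 s (V3 s).
Proof.
  intros Hs. unfold V2. eapply dR_eq. apply dR_plus. apply dR_mult. apply is_derive_scal. apply d_aapow; auto.
  apply d_W0; auto. apply dR_mult. apply d_aapow; auto. apply d_W1; auto.
  unfold V3. simpl INR. ring.
Qed.

Lemma c_V3 (s : R) : s < 1 -> continuous V3 s.
Proof.
  intros Hs. unfold V3.
  assert (Ha : forall n, continuous (fun s => aa s ^ n) s) by (intros; eapply cR_der; apply d_aapow; auto).
  assert (H0 : continuous W0 s) by (eapply cR_der; apply d_W0; auto).
  assert (H1 : continuous W1 s) by (eapply cR_der; apply d_W1; auto).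
  assert (H2 : continuous W2 s).
  { unfold W2. apply cR_plus. apply cR_mult. apply cR_const. eapply cR_der; apply d_V2; auto. apply Hu2. }
  apply cR_plus. apply cR_plus. apply cR_mult; auto. apply cR_mult; auto. apply cR_const.
  apply cR_mult; auto. apply cR_mult; auto. apply cR_const. apply cR_mult; auto.
Qed.


Lemma cV1 (s : R) : s < 1 -> continuous V1 s.
Proof. intros; eapply cR_der; apply d_V1; auto. Qed.
Lemma cV2 (s : R) : s < 1 -> continuous V2 s.
Proof. intros; eapply cR_der; apply d_V2; auto. Qed.
Lemma cvv (s : R) : s < 1 -> continuous vv s.
Proof. intros; eapply cR_der; apply d_vv; auto. Qed.

Definition GG s := vv s / s.
Definition MM s := s * V1 s - vv s.
Definition NN s := s ^ 2 * V2 s - 2 * s * V1 s + 2 * vv s.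
Definition GG1 s := MM s / s ^ 2.
Definition GG2 s := NN s / s ^ 3.

Lemma d_MM (s : R) : s < 1 -> is_derive MM s (s ^ 1 * V2 s).
Proof.
  intros Hs. unfold MM. eapply dR_eq. apply dR_minus. apply dR_mult. apply dR_id. apply d_V1; auto.
  apply d_vv; auto. cbv beta. ring.
Qed.

Lemma d_NN (s : R) : s < 1 -> is_derive NN s (s ^ 2 * V3 s).
Proof.
  intros Hs. unfold NN. eapply dR_eq. apply dR_plus. apply dR_minus. apply dR_mult.
  apply (is_derive_pow (fun t => t)). apply dR_id. apply d_V2; auto.
  apply dR_mult. apply is_derive_scal. apply dR_id. apply d_V1; auto.
  apply is_derive_scal. apply d_vv; auto. cbv beta. simpl. ring.
Qed.

Lemma d_quot (f : R -> R) n (s df : R) : 0 < s -> is_derive f s df ->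
  is_derive (fun t => f t / t ^ n) s (df / s ^ n - INR n * f s / s ^ (S n)).
Proof.
  intros Hs Hf. unfold Rdiv. eapply dR_eq. apply dR_mult. exact Hf.
  apply dR_inv. apply (is_derive_pow (fun t => t)). apply dR_id. apply pow_nonzero; lra.
  destruct n. simpl. field. lra.
  simpl pred. replace (s ^ S (S n)) with (s * s ^ (S n)) by (simpl; ring).
  replace ((s ^ S n) ^ 2) with (s ^ S n * s ^ S n) by ring.
  replace (s ^ S n) with (s * s ^ n) by (simpl; ring).
  field. split; [apply pow_nonzero; lra|lra].
Qed.

Lemma d_GG (s : R) : 0 < s < 1 -> is_derive GG s (GG1 s).
Proof.
  intros Hs. apply (is_derive_ext (fun t => vv t / t ^ 1)). intros; unfold GG; simpl; rewrite Rmult_1_r; auto.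
  eapply dR_eq. apply d_quot. lra. apply d_vv; lra.
  unfold GG1, MM. simpl. field. lra.
Qed.

Lemma d_GG1 (s : R) : 0 < s < 1 -> is_derive GG1 s (GG2 s).
Proof.
  intros Hs. unfold GG1. eapply dR_eq. apply d_quot. lra. apply d_MM; lra.
  unfold GG2, NN, MM. simpl. field. lra.
Qed.

Lemma c_GG2 (s : R) : 0 < s < 1 -> continuous GG2 s.
Proof.
  intros Hs. unfold GG2. unfold Rdiv. apply cR_mult. eapply cR_der. apply d_NN. lra.
  eapply cR_der. apply dR_inv. apply (is_derive_pow (fun t => t)). apply dR_id. apply pow_nonzero; lra.
Qed.

Lemma Fi0 : Fi 0 = 0.
Proof. unfold Fi. exact (RInt_point 0 (fun x => u x * kk lam x)). Qed.

Lemma vv0 : vv 0 = 0.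
Proof. unfold vv. rewrite Fi0. ring. Qed.

Lemma LimR0_ext (f g : R -> R) l : (forall s, 0 < s < 1 -> f s = g s) -> LimR0 f l -> LimR0 g l.
Proof.
  intros He H e Hep. destruct (H e Hep) as [d [Hd K]]. exists (Rmin d 1). split. apply Rmin_pos; lra.
  intros s Hs. pose proof (Rmin_l d 1). pose proof (Rmin_r d 1). rewrite <- He by lra. apply K. lra.
Qed.

Lemma LimR0_eq (f : R -> R) l l' : LimR0 f l -> l = l' -> LimR0 f l'.
Proof. intros H ->; auto. Qed.

Lemma lim0_GG : LimR0 GG (V1 0).
Proof.
  apply (LimR0_ext (fun s => vv s / s ^ 1)). intros; unfold GG; simpl; rewrite Rmult_1_r; auto.
  eapply LimR0_eq. apply (lim0_pow vv V1 0). apply vv0.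
  intros t Ht. eapply dR_eq. apply d_vv; lra. simpl; ring. apply cV1; lra. simpl. field.
Qed.

Lemma lim0_GG1 : LimR0 GG1 (V2 0 / 2).
Proof.
  eapply LimR0_eq. apply (lim0_pow MM V2 1). unfold MM; rewrite vv0; ring.
  intros t Ht. apply d_MM; lra. apply cV2; lra. simpl. field.
Qed.

Lemma lim0_GG2 : LimR0 GG2 (V3 0 / 3).
Proof.
  eapply LimR0_eq. apply (lim0_pow NN V3 2). unfold NN; rewrite vv0; ring.
  intros t Ht. apply d_NN; lra. apply c_V3; lra. simpl. field.
Qed.


Hypothesis Hint : RInt (fun x => u x * kk lam x) 0 1 = 0.

Lemma ChaslesR (f : R -> R) a b c : ex_RInt f a b -> ex_RInt f b c -> RInt f a b + RInt f b c = RInt f a c.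
Proof. intros H1 H2. exact (RInt_Chasles f a b c H1 H2). Qed.

Lemma vv_L (s : R) : s < 1 -> vv s = - Lop lam u s.
Proof.
  intros Hs. unfold vv, Lop, Fi, ee.
  assert (E := ChaslesR (fun x => u x * kk lam x) 0 s 1).
  rewrite Hint in E.
  assert (Hex : forall a b, ex_RInt (fun x => u x * kk lam x) a b) by (intros; apply ex_RInt_cont; intros; apply cont_gk; auto; apply cu).
  specialize (E (Hex _ _) (Hex _ _)).
  assert (E2 : RInt (fun x => u x * kk lam x) 0 s = - RInt (fun x => u x * kk lam x) s 1) by lra.
  rewrite E2. ring.
Qed.

Definition PP s := Lop lam (fun x => (1 - x) ^ 2 * u1 x) s.
Definition A4 s := Lop lam (fun x => (1 - x) ^ 4 * u2 x) s.
Definition B3 s := Lop lam (fun x => (1 - x) ^ 3 * u1 x) s.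
Definition cR x := (1 - x) * u2 x - 3 * u1 x.
Definition RR s := Lop lam (fun x => (1 - x) ^ 4 * cR x) s.

Lemma cpow (n : nat) (f : R -> R) : (forall x, continuous f x) -> forall x : R, continuous (fun x => (1 - x) ^ n * f x) x.
Proof. intros Hf x. apply cR_mult. apply c_pow1. auto. Qed.

Lemma I1 (s : R) : s < 1 -> lam * Lop lam u s = u s + PP s.
Proof. intros Hs. apply IBP; auto. exact cu1. Qed.

Lemma c_1x (x : R) : continuous (fun x => 1 - x) x.
Proof. apply cR_minus. apply cR_const. apply cR_id. Qed.

Lemma I2 (s : R) : s < 1 -> lam * PP s = (1 - s) ^ 2 * u1 s + (A4 s - 2 * B3 s).
Proof.
  intros Hs. unfold PP.
  rewrite (IBP lam Hlam (fun x => (1 - x) ^ 2 * u1 x) (fun x => - 2 * (1 - x) * u1 x + (1 - x) ^ 2 * u2 x)); auto.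
  - f_equal. rewrite (Lop_ext lam _ (fun x => (1 - x) ^ 4 * u2 x + (-2) * ((1 - x) ^ 3 * u1 x))); auto.
    rewrite Lop_plus, Lop_scal; auto. unfold A4, B3. ring.
    apply cpow; exact cu1. apply cpow; exact Hu2. intros; apply cR_mult. apply cR_const. apply cpow; exact cu1.
    intros x _. ring.
  - intros x. eapply dR_eq. apply dR_mult. apply d_pow1. apply Hu1. simpl. ring.
  - intros x. apply cR_plus. apply cR_mult. apply cR_mult. apply cR_const. apply c_1x. apply cu1.
    apply cpow. exact Hu2.
Qed.

Lemma I3 (s : R) : s < 1 -> lam * B3 s = (1 - s) ^ 3 * u1 s + RR s.
Proof.
  intros Hs. unfold B3.
  rewrite (IBP lam Hlam (fun x => (1 - x) ^ 3 * u1 x) (fun x => - 3 * (1 - x) ^ 2 * u1 x + (1 - x) ^ 3 * u2 x)); auto.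
  - f_equal. unfold RR. apply Lop_ext; auto. intros x _. unfold cR. ring.
  - intros x. eapply dR_eq. apply dR_mult. apply d_pow1. apply Hu1. simpl. ring.
  - intros x. apply cR_plus. apply cR_mult. apply cR_mult. apply cR_const. apply c_pow1. apply cu1.
    apply cpow. exact Hu2.
Qed.

Lemma V1_L (s : R) : s < 1 -> V1 s = - (PP s / (1 - s) ^ 2).
Proof.
  intros Hs. unfold V1, W0, aa. rewrite vv_L by auto.
  assert (H := I1 s Hs). replace (lam * - Lop lam u s + u s) with (- PP s) by lra.
  field. lra.
Qed.

Lemma V2_L (s : R) : s < 1 -> V2 s =
  -(2 / lam) * ((1 - s) * (A4 s / (1 - s) ^ 4)) + (4 / lam) * (B3 s / (1 - s) ^ 3)
  - A4 s / (1 - s) ^ 4 + (2 / lam) * (RR s / (1 - s) ^ 4).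
Proof.
  intros Hs. unfold V2, W1, W0. rewrite V1_L by auto. unfold aa. rewrite vv_L by auto.
  assert (H := I1 s Hs). replace (lam * - Lop lam u s + u s) with (- PP s) by lra.
  assert (Hp : PP s = ((1 - s) ^ 2 * u1 s + (A4 s - 2 * B3 s)) / lam) by (rewrite <- I2 by auto; field; lra).
  assert (Hr : RR s = lam * B3 s - (1 - s) ^ 3 * u1 s) by (rewrite (I3 s Hs); ring).
  rewrite Hp, Hr. field. lra.
Qed.

Lemma ev_left (P : R -> Prop) : (forall s, 0 < s < 1 -> P s) -> at_left 1 P.
Proof.
  intros H. exists (mkposreal 1 Rlt_0_1). intros y Hy Hy1. apply H.
  change (Rabs (y - 1) < 1) in Hy. apply Rabs_def2 in Hy. lra.
Qed.

Lemma lim_cont1 (f : R -> R) : continuous f 1 -> filterlim f (at_left 1) (locally (f 1)).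
Proof. intros H. exact (filterlim_filter_le_1 f (filter_le_within _) H). Qed.

Lemma limA (c : R -> R) n : (forall x, continuous c x) ->
  filterlim (fun s => Lop lam (fun x => (1 - x) ^ n * c x) s / (1 - s) ^ n) (at_left 1) (locally (c 1 / lam)).
Proof. intros Hc. apply LimL_iff. apply LopA; auto. Qed.

Lemma lim_vv : filterlim vv (at_left 1) (locally (- (u 1 / lam))).
Proof.
  apply (filterlim_ext_loc (fun s => -1 * (Lop lam (fun x => (1 - x) ^ 0 * u x) s / (1 - s) ^ 0))).
  apply ev_left. intros s Hs. rewrite vv_L by lra. rewrite (Lop_ext lam _ u) by (try lra; intros; simpl; ring).
  simpl. field.
  eapply lim_eq. apply lim_scal. apply limA. exact cu. ring.
Qed.

Lemma lim_V1 : filterlim V1 (at_left 1) (locally (- (u1 1 / lam))).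
Proof.
  apply (filterlim_ext_loc (fun s => -1 * (Lop lam (fun x => (1 - x) ^ 2 * u1 x) s / (1 - s) ^ 2))).
  apply ev_left. intros s Hs. rewrite V1_L by lra. unfold PP. ring.
  eapply lim_eq. apply lim_scal. apply limA. exact cu1. ring.
Qed.

Definition l2v := -(2 / lam) * (0 * (u2 1 / lam)) + (4 / lam) * (u1 1 / lam)
  - u2 1 / lam + (2 / lam) * (cR 1 / lam).

Lemma cRc x : continuous cR x.
Proof. unfold cR. apply cR_minus. apply cR_mult. apply c_1x. apply Hu2. apply cR_mult. apply cR_const. apply cu1. Qed.

Lemma lim_1s : filterlim (fun s => 1 - s) (at_left 1) (locally 0).
Proof. replace 0 with ((fun s => 1 - s) 1) by (simpl; ring). apply lim_cont1. apply c_1x. Qed.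

Lemma lim_V2 : filterlim V2 (at_left 1) (locally l2v).
Proof.
  apply (filterlim_ext_loc (fun s => -(2 / lam) * ((1 - s) * (A4 s / (1 - s) ^ 4)) + (4 / lam) * (B3 s / (1 - s) ^ 3)
  - A4 s / (1 - s) ^ 4 + (2 / lam) * (RR s / (1 - s) ^ 4))).
  apply ev_left. intros s Hs. rewrite V2_L by lra. reflexivity.
  unfold l2v. apply lim_plus. apply lim_minus. apply lim_plus.
  - apply lim_scal. apply lim_mult. apply lim_1s. apply limA. exact Hu2.
  - apply lim_scal. apply limA. exact cu1.
  - apply limA. exact Hu2.
  - apply lim_scal. apply limA. exact cRc.
Qed.

Lemma lim_invpow k : filterlim (fun s => / s ^ k) (at_left 1) (locally 1).
Proof.
  replace 1 with ((fun s => / s ^ k) 1) at 2 by (rewrite pow1; field). apply lim_cont1.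
  eapply cR_der. apply dR_inv. apply (is_derive_pow (fun t => t)). apply dR_id. rewrite pow1; lra.
Qed.

Lemma lim_id1 : filterlim (fun s => s) (at_left 1) (locally 1).
Proof. apply (lim_cont1 (fun s => s)). apply cR_id. Qed.

Definition l0 := - (u 1 / lam).
Definition l1 := 1 * - (u1 1 / lam) - - (u 1 / lam).
Definition l2 := 1 * l2v - 2 * 1 * - (u1 1 / lam) + 2 * - (u 1 / lam).

Lemma lim1_GG : LimL GG l0.
Proof.
  apply LimL_iff. apply (filterlim_ext_loc (fun s => vv s * / s ^ 1)).
  apply ev_left. intros; unfold GG; simpl; field; lra.
  eapply lim_eq. apply lim_mult. apply lim_vv. apply lim_invpow. unfold l0; ring.
Qed.

Lemma lim1_GG1 : LimL GG1 l1.
Proof.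
  apply LimL_iff. apply (filterlim_ext_loc (fun s => (s * V1 s - vv s) * / s ^ 2)).
  apply ev_left. intros; unfold GG1, MM; reflexivity.
  eapply lim_eq. apply lim_mult. apply lim_minus. apply lim_mult. apply lim_id1. apply lim_V1. apply lim_vv.
  apply lim_invpow. unfold l1; ring.
Qed.

Lemma lim1_GG2 : LimL GG2 l2.
Proof.
  apply LimL_iff. apply (filterlim_ext_loc (fun s => (s * s * V2 s - 2 * s * V1 s + 2 * vv s) * / s ^ 3)).
  apply ev_left. intros; unfold GG2, NN. unfold Rdiv. f_equal. simpl. ring.
  eapply lim_eq. apply lim_mult. apply lim_plus. apply lim_minus. apply lim_mult. apply lim_mult. apply lim_id1. apply lim_id1.
  apply lim_V2. apply lim_mult. apply lim_scal. apply lim_id1. apply lim_V1. apply lim_scal. apply lim_vv.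
  apply lim_invpow. unfold l2; ring.
Qed.

End M.


Definition glue (g : R -> R) a b (s : R) : R :=
  if Rle_dec s 0 then a else if Rlt_dec s 1 then g s else b.

Lemma glue_in g a b s : 0 < s < 1 -> glue g a b s = g s.
Proof. intros Hs. unfold glue. destruct (Rle_dec s 0); [lra|]. destruct (Rlt_dec s 1); [auto|lra]. Qed.
Lemma glue_0 g a b : glue g a b 0 = a.
Proof. unfold glue. destruct (Rle_dec 0 0); [auto|lra]. Qed.
Lemma glue_1 g a b : glue g a b 1 = b.
Proof. unfold glue. destruct (Rle_dec 1 0); [lra|]. destruct (Rlt_dec 1 1); [lra|auto]. Qed.

Lemma glue_deriv (g g' : R -> R) a0 a1 b0 b1 :
  (forall t, 0 < t < 1 -> is_derive g t (g' t)) -> LimR0 g a0 -> LimR0 g' a1 -> LimL g b0 -> LimL g' b1 ->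
  forall x, I01 x -> deriv_within01 (glue g a0 b0) x (glue g' a1 b1 x).
Proof.
  intros Hd H0 H0' H1 H1' x Hx. apply DW_iff. unfold I01 in Hx.
  destruct (Req_dec x 0) as [E0|E0].
  - subst x. rewrite glue_0. intros e He. destruct (end_right g g' a0 a1 Hd H0 H0' e He) as [d [Hd0 [Hd1 K]]].
    exists d. split; auto. intros y Hy Hy0 Hyd. unfold I01 in Hy. rewrite Rminus_0_r in Hyd.
    rewrite Rabs_pos_eq in Hyd by lra. rewrite glue_0, glue_in by lra. apply K. lra.
  destruct (Req_dec x 1) as [E1|E1].
  - subst x. rewrite glue_1. intros e He. destruct (end_left g g' b0 b1 Hd H1 H1' e He) as [d [Hd0 [Hd1 K]]].
    exists d. split; auto. intros y Hy Hy0 Hyd. unfold I01 in Hy.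
    rewrite Rabs_left in Hyd by lra. rewrite glue_1, glue_in by lra. apply K. lra.
  - rewrite glue_in by lra. apply EDW_of_derivable. apply is_derive_Reals.
    apply (der_loc _ g x (Rmin x (1 - x))). apply Rmin_pos; lra.
    intros y Hy. apply Rabs_def2 in Hy. pose proof (Rmin_l x (1 - x)). pose proof (Rmin_r x (1 - x)).
    apply glue_in. lra. apply Hd. lra.
Qed.

Lemma glue_cont (g : R -> R) a0 b0 :
  (forall t, 0 < t < 1 -> continuous g t) -> LimR0 g a0 -> LimL g b0 ->
  forall x, I01 x -> cont_within01 (glue g a0 b0) x.
Proof.
  intros Hc H0 H1 x Hx. apply CW_iff. unfold I01 in Hx.
  destruct (Req_dec x 0) as [E0|E0].
  - subst x. rewrite glue_0. intros e He. destruct (H0 e He) as [d [Hd K]].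
    exists (Rmin d 1). split. apply Rmin_pos; lra. intros y Hy Hyd. unfold I01 in Hy.
    pose proof (Rmin_l d 1). pose proof (Rmin_r d 1).
    rewrite Rminus_0_r, Rabs_pos_eq in Hyd by lra.
    destruct (Req_dec y 0). subst y. rewrite glue_0, Rminus_eq_0, Rabs_R0; lra.
    rewrite glue_in by lra. apply K. lra.
  destruct (Req_dec x 1) as [E1|E1].
  - subst x. rewrite glue_1. intros e He. destruct (H1 e He) as [d [Hd K]].
    exists (Rmin d 1). split. apply Rmin_pos; lra. intros y Hy Hyd. unfold I01 in Hy.
    pose proof (Rmin_l d 1). pose proof (Rmin_r d 1).
    destruct (Req_dec y 1). subst y. rewrite glue_1, Rminus_eq_0, Rabs_R0; lra.
    rewrite Rabs_left in Hyd by lra.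
    rewrite glue_in by lra. apply K. lra.
  - rewrite glue_in by lra. intros e He.
    pose proof (Hc x ltac:(lra)) as Hcx. unfold continuous in Hcx. rewrite filterlim_locally in Hcx.
    destruct (Hcx (mkposreal e He)) as [d K].
    exists (Rmin d (Rmin x (1 - x))). split. apply Rmin_pos. apply cond_pos. apply Rmin_pos; lra.
    intros y Hy Hyd. pose proof (Rmin_l d (Rmin x (1 - x))). pose proof (Rmin_r d (Rmin x (1 - x))).
    pose proof (Rmin_l x (1 - x)). pose proof (Rmin_r x (1 - x)).
    assert (Hy' := Hyd). apply Rabs_def2 in Hy'.
    rewrite glue_in by lra. apply (K y). change (Rabs (y - x) < d). lra.
Qed.

Section Main.
Variable lam : R.
Hypothesis Hlam : 0 < lam.
Variables u u1 u2 : R -> R.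
Hypothesis Hu : forall x, is_derive u x (u1 x).
Hypothesis Hu1 : forall x, is_derive u1 x (u2 x).
Hypothesis Hu2 : forall x, continuous u2 x.
Hypothesis Hint : RInt (fun x => u x * kk lam x) 0 1 = 0.

Lemma main_u : exists Gbar : R -> R,
  (forall s, 0 < s < 1 -> Gbar s = GG lam u s) /\ C2_01 Gbar.
Proof.
  exists (glue (GG lam u) (V1 lam u 0) (l0 lam u)). split.
  - intros s Hs. apply glue_in; auto.
  - exists (glue (GG1 lam u) (V2 lam u u1 0 / 2) (l1 lam u u1)).
    exists (glue (GG2 lam u u1) (V3 lam u u1 u2 0 / 3) (l2 lam u u1 u2)).
    split; [|split].
    + apply glue_deriv. intros; eapply d_GG; eauto.
      eapply lim0_GG; eauto. eapply lim0_GG1; eauto.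
      eapply lim1_GG; eauto. eapply lim1_GG1; eauto.
    + apply glue_deriv. intros; eapply d_GG1; eauto.
      eapply lim0_GG1; eauto. eapply lim0_GG2; eauto.
      eapply lim1_GG1; eauto. eapply lim1_GG2; eauto.
    + apply glue_cont. intros; eapply c_GG2; eauto.
      eapply lim0_GG2; eauto. eapply lim1_GG2; eauto.
Qed.

End Main.


Theorem lemma5 (lam : R) (h : R -> R) (Hlam : 0 < lam) (Hh : C2_01 h) :
  exists Gbar : R -> R,
    (forall s, 0 < s < 1 -> Gbar s = Gfun lam h s) /\ C2_01 Gbar.
Proof.
  destruct Hh as [h1 [h2 [D1 [D2 C2]]]].
  assert (E1 : forall x, I01 x -> EDW I01 h x (h1 x)) by (intros; apply DW_iff; auto).
  assert (E2 : forall x, I01 x -> EDW I01 h1 x (h2 x)) by (intros; apply DW_iff; auto).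
  assert (E3 : forall x, I01 x -> ECW I01 h2 x (h2 x)) by (intros; apply CW_iff; auto).
  set (HH := Ext h (h1 0) (h2 0) (h1 1) (h2 1)).
  set (U1 := Ext h1 (h2 0) 0 (h2 1) 0).
  set (U2 := Ext h2 0 0 0 0).
  set (c := (RInt (fun x => rho lam x * h x) 0 1 : R)).
  set (u := fun x => HH x - c).
  assert (dH : forall x : R, is_derive HH x (U1 x)).
  { intros x. apply is_derive_Reals. apply (ext_deriv h h1 (h2 0) (h2 1) E1). }
  assert (Hu : forall x : R, is_derive u x (U1 x)).
  { intros x. unfold u. eapply dR_eq. apply dR_minus. apply dH. apply dR_const. ring. }
  assert (Hu1 : forall x : R, is_derive U1 x (U2 x)).
  { intros x. apply is_derive_Reals. apply (ext_deriv h1 h2 0 0 E2). }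
  assert (Hu2 : forall x : R, continuous U2 x).
  { intros x. apply continuity_pt_filterlim. apply ext_cont. auto. }
  assert (cH : forall x : R, continuous HH x) by (intros; eapply cR_der; apply dH).
  assert (Hint : RInt (fun x => u x * kk lam x) 0 1 = 0).
  { pose proof (Lop_one lam Hlam 0 ltac:(lra)) as J. unfold Lop in J.
    replace (lam / (1 - 0)) with lam in J by field.
    assert (Ec : c = lam * exp lam * RInt (fun x => HH x * kk lam x) 0 1).
    { unfold c. rewrite (RInt_extR _ (fun x => (lam * exp lam) * (HH x * kk lam x))).
      apply RInt_scalR. apply ex_RInt_cont. intros; apply cont_gk; auto.
      intros x Hx. rewrite Rmin_left, Rmax_right in Hx by lra.
      unfold HH. rewrite Ext_in by (unfold I01; lra). unfold rho, kk.
      destruct (Rlt_dec x 1); [|lra].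
      replace (- (lam * x / (1 - x))) with (lam + - lam / (1 - x)) by (field; lra).
      rewrite exp_plus. field. lra. }
    assert (S1 : RInt (fun x => u x * kk lam x) 0 1 = RInt (fun x => HH x * kk lam x + (- c) * (1 * kk lam x)) 0 1).
    { apply RInt_extR. intros. unfold u. ring. }
    assert (X1 : ex_RInt (fun x => HH x * kk lam x) 0 1) by (apply ex_RInt_cont; intros; apply cont_gk; auto).
    assert (X2 : ex_RInt (fun x => 1 * kk lam x) 0 1) by (apply ex_RInt_cont; intros; apply cont_gk; auto; intros; apply cR_const).
    assert (X3 : ex_RInt (fun x => (- c) * (1 * kk lam x)) 0 1).
    { apply ex_RInt_cont. intros; apply cR_mult. apply cR_const. apply cont_gk; auto. intros; apply cR_const. }
    rewrite S1. rewrite (RInt_plusR _ _ _ _ X1 X3). rewrite (RInt_scalR _ _ _ _ X2).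
    rewrite Ec. set (I := (RInt (fun x => HH x * kk lam x) 0 1 : R)).
    set (J' := (RInt (fun x => 1 * kk lam x) 0 1 : R)) in *.
    replace (I + - (lam * exp lam * I) * J') with (I * (1 - lam * (exp lam * J'))) by ring.
    rewrite J, Rminus_eq_0. apply Rmult_0_r. }
  destruct (main_u lam Hlam u U1 U2 Hu Hu1 Hu2 Hint) as [Gbar [HG HC]].
  exists Gbar. split; auto.
  intros s Hs. rewrite HG by auto. unfold GG, vv, ee, Fi, Gfun.
  rewrite (RInt_extR (fun x => htilde lam h x / (1 - x) ^ 2 * exp (- lam / (1 - x))) (fun x => u x * kk lam x)).
  - unfold Rdiv. ring.
  - intros x Hx. rewrite Rmin_left, Rmax_right in Hx by lra.
    unfold u, HH, htilde, kk. rewrite Ext_in by (unfold I01; lra).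
    destruct (Rlt_dec x 1); [|lra]. fold c. unfold Rdiv. ring.
Qed.
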